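(* Let $f:X\to Y$ be a continuous map between metric spaces, let $q:[a,b]\to X$ be a continuous path, and suppose that $p=f\circ q$ is rectifiable. Then: (1) if $q(a)\ne q(b)$, there exists $\tau\in[a,b]$ such that $\ell(p)\ge D^-_{q(\tau)}f\cdot d(q(a),q(b))$; (2) if $0<\inf_{x\in\operatorname{Im}q}D_x^-f<\infty$, then $\ell(p)\ge \inf_{x\in\operatorname{Im}q}D_x^-f\cdot\ell(q)$.
   Context: The length of a path $q:[a,b]\to X$ in a metric space is $\ell(q)=\sup\sum_{i=0}^{n-1}d(q(t_i),q(t_{i+1}))$ over all partitions $a=t_0\le\dots\le t_n=b$ (possibly $+\infty$); $q$ is rectifiable if $\ell(q)<\infty$. For a continuous map $f:X\to Y$ and a non-isolated point $x\in X$, $D_x^-f=\liminf_{z\to x,\,z\neq x}\frac{d(f(z),f(x))}{d(z,x)}\in[0,\infty]$. It is assumed that $X$ has no isolated points. *)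

(* Defs.v *)
From HB Require Import structures.
From mathcomp Require Import all_boot all_order all_algebra.
From mathcomp Require Import all_classical all_reals all_analysis.
Set Implicit Arguments. Unset Strict Implicit. Unset Printing Implicit Defensive.
Import Order.TTheory GRing.Theory Num.Theory numFieldNormedType.Exports.
Local Open Scope classical_set_scope.
Local Open Scope ring_scope.
Local Open Scope ereal_scope.

Definition partition (R : realType) (a b : R) (n : nat) (t : nat -> R) : Prop :=
  t 0%N = a /\ t n = b /\ (forall i : nat, (i < n)%N -> (t i <= t i.+1)%R).

(* Length of a path q : [a,b] -> X (q given as a function on R, only its
   values on [a,b] matter): sup over all partitions of the polygonal sums,
   valued in [0, +oo]. *)
Definition path_length (R : realType) (X : metricType R) (q : R -> X) (a b : R)
  : \bar R :=
  ereal_sup [set l : \bar R | exists (n : nat) (t : nat -> R),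
              partition a b n t /\
              l = ((\sum_(i < n) mdist (q (t i)) (q (t i.+1)))%R)%:E].

Definition rectifiable (R : realType) (X : metricType R) (q : R -> X) (a b : R)
  : Prop := path_length q a b < +oo.

(* Lower derivative D_x^- f = liminf_{z -> x, z <> x} d(f z, f x) / d(z, x),
   in [0, +oo], written as sup_{r > 0} inf_{0 < d(z,x) < r} ratio. *)
Definition lower_deriv (R : realType) (X Y : metricType R) (f : X -> Y) (x : X)
  : \bar R :=
  ereal_sup [set ereal_inf
                   [set ((mdist (f z) (f x) / mdist z x)%R)%:E
                   | z in [set z : X | (0 < mdist z x < r)%R]]
            | r in [set r : R | (0 < r)%R]].

Definition no_isolated_points (R : realType) (X : metricType R) : Prop :=
  forall (x : X) (e : R), (0 < e)%R -> exists z : X, z <> x /\ (mdist z x < e)%R.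

(* Main.v *)
Require Import Defs.
From HB Require Import structures.
From mathcomp Require Import all_boot all_order all_algebra.
From mathcomp Require Import all_classical all_reals all_analysis.
From mathcomp Require Import zify lra.
Import Order.TTheory GRing.Theory Num.Theory numFieldNormedType.Exports.
Local Open Scope classical_set_scope.
Local Open Scope ring_scope.

Lemma cont_eps (R : realType) (X : metricType R) (q : R -> X) (a b t r : R) :
  {within `[a, b]%classic, continuous q} -> a <= t <= b -> 0 < r ->
  exists2 d, 0 < d & forall s, a <= s <= b -> `|t - s| < d -> mdist (q t) (q s) < r.
Proof.
move=> /subspace_continuousP hq ht r0.
have := hq t; rewrite /= in_itv /= => /(_ ht).
move=> /metricType_numDomainType.cvgrPdist_lt /(_ r r0).
rewrite /within /= => /nbhs_ballP [d d0 hd]; exists d => // s hs hts.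
apply: (hd s); last by rewrite /= in_itv /=.
by rewrite /ball /=.
Qed.

Lemma partition_bounds (R : realType) (a b : R) n t :
  Defs.partition a b n t -> forall i, (i <= n)%N -> a <= t i <= b.
Proof.
move=> [t0 [tn tm]] i hi; apply/andP; split.
  elim: i hi => [|i IH] hi; first by rewrite t0.
  apply: (le_trans (IH (ltnW hi))); exact: tm.
have H : forall k, (k <= n)%N -> t (n - k)%N <= b.
  elim=> [|k IH] hk; first by rewrite subn0 tn.
  apply: le_trans (IH (ltnW hk)).
  have -> : (n - k = (n - k.+1).+1)%N by lia.
  apply: tm; lia.
have := H (n - i)%N (leq_subr _ _).
by have -> : (n - (n - i) = i)%N by lia.
Qed.

Definition cat_s (R : realType) (n1 : nat) (s1 s2 : nat -> R) (j : nat) : R :=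
  if (j <= n1)%N then s1 j else s2 (j - n1)%N.
Arguments cat_s {R}.

Lemma concat_part (R : realType) (u v w : R) n1 s1 n2 s2 :
  Defs.partition u v n1 s1 -> Defs.partition v w n2 s2 ->
  Defs.partition u w (n1 + n2) (cat_s n1 s1 s2) /\
  forall F : R -> R -> R,
    \sum_(i < n1 + n2) F (cat_s n1 s1 s2 i) (cat_s n1 s1 s2 i.+1) =
    \sum_(i < n1) F (s1 i) (s1 i.+1) + \sum_(i < n2) F (s2 i) (s2 i.+1).
Proof.
move=> [a0 [an am]] [b0 [bn bm]].
have E : forall i, cat_s n1 s1 s2 (n1 + i)%N = s2 i.
  move=> i; rewrite /cat_s; case: ifP => h.
    have -> : i = 0%N by lia.
    by rewrite addn0 an b0.
  by congr s2; lia.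
split; last first.
  move=> F; rewrite big_split_ord /=; congr (_ + _); apply: eq_bigr => i _ /=.
    rewrite /cat_s (ltnW (ltn_ord i)) (ltn_ord i) //.
  by have := E i; have := E i.+1; rewrite addnS => -> ->.
split; first by rewrite /cat_s leq0n a0.
split; first by rewrite E bn.
move=> i hi; case: (ltngtP i n1) => h.
  by rewrite /cat_s (ltnW h) h; apply: am.
  have -> : i = (n1 + (i - n1))%N by lia.
  rewrite -addnS !E; apply: bm; lia.
rewrite h; have := E 0%N; have := E 1%N; rewrite addn0 addn1 => -> ->; apply: bm; lia.
Qed.
Arguments concat_part {R u v w n1 s1 n2 s2}.
Arguments partition_bounds {R a b n t}.
Arguments cont_eps {R X q a b t r}.

Definition Pair {R : realType} {X Y : metricType R} (f : X -> Y) (q : R -> X)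
  (k u v : R) : Prop :=
  k * mdist (q u) (q v) <= mdist (f (q u)) (f (q v)) /\
  (0 < mdist (q u) (q v) -> k * mdist (q u) (q v) < mdist (f (q u)) (f (q v))).

Definition SF {R : realType} {X Y : metricType R} (f : X -> Y) (q : R -> X) n (s : nat -> R) :=
  \sum_(i < n) mdist (f (q (s i))) (f (q (s i.+1))).
Definition SQ {R : realType} {X : metricType R} (q : R -> X) n (s : nat -> R) :=
  \sum_(i < n) mdist (q (s i)) (q (s i.+1)).

Definition Good {R : realType} {X Y : metricType R} (f : X -> Y) (q : R -> X)
  (k u v : R) : Prop :=
  exists n s, Defs.partition u v n s /\ k * SQ q n s <= SF f q n s /\
    (0 < SQ q n s -> k * SQ q n s < SF f q n s) /\ mdist (q u) (q v) <= SQ q n s.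

Lemma Pair_sym {R : realType} {X Y : metricType R} (f : X -> Y) (q : R -> X) k u v :
  Pair f q k u v -> Pair f q k v u.
Proof. by rewrite /Pair metric_sym [mdist (f _) _]metric_sym. Qed.

Lemma SQ_ge0 {R : realType} {X : metricType R} (q : R -> X) n s : 0 <= SQ q n s.
Proof. by apply: sumr_ge0 => i _; apply: mdist_ge0. Qed.

Lemma Good_refl {R : realType} {X Y : metricType R} (f : X -> Y) (q : R -> X) k u :
  Good f q k u u.
Proof.
exists 0%N, (fun _ => u); split; first by [].
rewrite /SQ /SF !big_ord0 mulr0 ltxx mdistxx; split => //; split => //.
Qed.

Lemma Good_single {R : realType} {X Y : metricType R} (f : X -> Y) (q : R -> X) k u v :
  u <= v -> Pair f q k u v -> Good f q k u v.
Proof.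
move=> uv [h1 h2]; exists 1%N, (fun j => if j == 0%N then u else v).
rewrite /SQ /SF !big_ord1 /=; split.
  by split => //; split => // [[|]] //.
by split => //; split.
Qed.

Lemma Good_concat {R : realType} {X Y : metricType R} (f : X -> Y) (q : R -> X) k u v w :
  Good f q k u v -> Good f q k v w -> Good f q k u w.
Proof.
move=> [n1 [s1 [p1 [a1 [b1 c1]]]]] [n2 [s2 [p2 [a2 [b2 c2]]]]].
have [p E] := concat_part p1 p2.
exists (n1 + n2)%N, (cat_s n1 s1 s2); split => //.
have EQ : SQ q (n1 + n2) (cat_s n1 s1 s2) = SQ q n1 s1 + SQ q n2 s2.
  exact: (E (fun x y => mdist (q x) (q y))).
have EF : SF f q (n1 + n2) (cat_s n1 s1 s2) = SF f q n1 s1 + SF f q n2 s2.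
  exact: (E (fun x y => mdist (f (q x)) (f (q y)))).
rewrite EQ EF mulrDr; split; first exact: lerD.
split.
  move=> h; have := SQ_ge0 q n1 s1.
  rewrite le_eqVlt => /orP [/eqP e1|g1].
    rewrite -e1 add0r in h; exact: ler_ltD a1 (b2 h).
  exact: ltr_leD (b1 g1) a2.
apply: le_trans (metric_triangle _ (q v) _) _; exact: lerD.
Qed.

Lemma creep {R : realType} {X Y : metricType R} (f : X -> Y) (q : R -> X) (k a b : R) :
  (forall t, a <= t <= b -> exists2 d, 0 < d &
     forall s, a <= s <= b -> `|t - s| < d -> Pair f q k s t) ->
  forall u w, a <= u -> u <= w -> w <= b -> Good f q k u w.
Proof.
move=> H u w au uw wb.
have ub : u <= b by apply: le_trans wb.
pose S := [set v : R | u <= v <= b /\ forall w, u <= w <= v -> Good f q k u w].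
have Su : S u.
  split; first by rewrite lexx ub.
  move=> w' /andP[h1 h2]; have -> : w' = u by apply/eqP; rewrite eq_le h1 h2.
  exact: Good_refl.
have hub : has_ubound S by exists b => x [/andP[_ ->]].
have hs : has_sup S by split => //; exists u.
set v := sup S.
have uv : u <= v := ub_le_sup hub Su.
have vb : v <= b by apply: ge_sup; [exists u | move=> x [/andP[_ ->]]].
have [d d0 hd] := H v ltac:(apply/andP; split; [exact: le_trans uv| exact: vb]).
have C : forall w, u <= w -> w <= b -> w < v + d -> Good f q k u w.
  move=> w1 uw1 w1b w1d; case: (ltP w1 v) => hw.
    have e0 : 0 < v - w1 by rewrite subr_gt0.
    have [e [_ Se] he] := sup_adherent e0 hs.
    apply: Se; apply/andP; split => //.
    rewrite -/v in he; apply: ltW; lra.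
  have [e [/andP[ue eb] Se] he] := sup_adherent d0 hs; rewrite -/v in he.
  have Se2 : S e by split; [rewrite ue eb| exact: Se].
  have ev : e <= v := ub_le_sup hub Se2.
  apply: (Good_concat f q k u e); first by apply: Se; rewrite lexx ue.
  apply: (Good_concat f q k e v).
    apply: Good_single => //; apply: hd.
      by apply/andP; split => //; apply: le_trans ue.
    rewrite ltr_norml; apply/andP; split; lra.
  apply: Good_single => //; apply: Pair_sym; apply: hd.
    by apply/andP; split => //; apply: le_trans uw1.
  rewrite ltr_norml; apply/andP; split; lra.
have bvd : b < v + d.
  rewrite ltNge; apply/negP => hb.
  have Sv : S (v + d / 2).
    split; first by apply/andP; split; lra.
    move=> w' /andP[h1 h2]; apply: C => //; lra.
  have := ub_le_sup hub Sv; rewrite -/v; lra.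
apply: C => //; exact: le_lt_trans wb bvd.
Qed.

Lemma local_pair {R : realType} {X Y : metricType R} (f : X -> Y) (q : R -> X) (a b k t : R) :
  {within `[a, b]%classic, continuous q} -> a <= t <= b ->
  (k%:E < lower_deriv f (q t))%E ->
  exists2 d, 0 < d & forall s, a <= s <= b -> `|t - s| < d -> Pair f q k s t.
Proof.
move=> hq ht /ereal_sup_gt [y [r r0 <-] hy].
have [d d0 hd] := cont_eps hq ht r0.
exists d => // s hs hts.
have hsr : mdist (q s) (q t) < r by rewrite metric_sym; apply: hd.
rewrite /Pair; have := mdist_ge0 (q s) (q t).
rewrite le_eqVlt => /orP[/eqP <-|zp].
  by rewrite mulr0 ltxx; split => //; apply: mdist_ge0.
have Sin : [set ((mdist (f z) (f (q t)) / mdist z (q t))%R)%:E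
                   | z in [set z : X | (0 < mdist z (q t) < r)%R]]
   ((mdist (f (q s)) (f (q t)) / mdist (q s) (q t))%:E).
  by exists (q s) => //=; rewrite zp hsr.
have := lt_le_trans hy (ereal_inf_lbound Sin); rewrite lte_fin => hk.
have h : k * mdist (q s) (q t) < mdist (f (q s)) (f (q t)) by rewrite -ltr_pdivlMr.
by split => //; apply: ltW.
Qed.
Lemma lim_mul (R : realType) (x M L : R) : 0 <= x -> 0 < M -> 0 <= L ->
  (forall c, 0 < c -> c < M -> c * x <= L) -> M * x <= L.
Proof.
move=> x0 M0 L0 H; rewrite leNgt; apply/negP => hlt.
have xp : 0 < x.
  rewrite lt_neqAle x0 andbT; apply/negP => /eqP ex; rewrite -ex mulr0 in hlt; lra.
set y := L / x.
have hy : y * x = L by rewrite /y divfK // gt_eqF.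
have yM : y < M by rewrite /y ltr_pdivrMr.
have y0 : 0 <= y by rewrite /y divr_ge0 // ltW.
have := H ((y + M) / 2) ltac:(lra) ltac:(lra).
have -> : (y + M) / 2 * x = (y * x + M * x) / 2 by rewrite mulrAC mulrDl.
rewrite hy; lra.
Qed.

Lemma path_ub {R : realType} {X : metricType R} (g : R -> X) (a b : R) n t :
  Defs.partition a b n t ->
  ((\sum_(i < n) mdist (g (t i)) (g (t i.+1)))%:E <= path_length g a b)%E.
Proof. by move=> pt; apply: ereal_sup_ubound; exists n, t. Qed.
Arguments path_ub {R X} g {a b n t}.

Lemma path_ge0 {R : realType} {X : metricType R} (g : R -> X) (a b : R) :
  a <= b -> (0 <= path_length g a b)%E.
Proof.
move=> hab; apply: le_trans (@path_ub _ _ g a b 1 (fun j => if j == 0%N then a else b) _).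
  by rewrite big_ord1 lee_fin mdist_ge0.
by split => //; split => // [[|]] //.
Qed.

Theorem theorem3 (R : realType) (X Y : metricType R) (f : X -> Y)
    (q : R -> X) (a b : R) :
  no_isolated_points X ->
  continuous f ->
  (a <= b) ->
  {within `[a, b]%classic, continuous q} ->
  rectifiable (f \o q) a b ->
  (q a <> q b ->
     exists tau : R, a <= tau <= b /\
       (lower_deriv f (q tau) * (mdist (q a) (q b))%:E
          <= path_length (f \o q) a b)%E)
  /\
  (let m := ereal_inf [set lower_deriv f (q t) | t in `[a, b]%classic] in
   (0 < m)%E -> (m < +oo)%E ->
   (m * path_length q a b <= path_length (f \o q) a b)%E).
Proof.
move=> _ _ hab hq hrect.
have Lge0 := path_ge0 (f \o q) a b hab.
have Lfin : path_length (f \o q) a b = (fine (path_length (f \o q) a b))%:E.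
  by rewrite fineK // ge0_fin_numE.
move: Lfin; set L := fine _ => Lfin.
have L0 : 0 <= L by rewrite -lee_fin -Lfin.
have SFub : forall n s, Defs.partition a b n s -> SF f q n s <= L.
  by move=> n s ps; rewrite -lee_fin -Lfin; apply: (path_ub (f \o q) ps).
split.
  move=> hneq; set d := mdist (q a) (q b).
  have d0 : 0 < d by rewrite mdist_gt0; apply/eqP.
  apply: contrapT => hne.
  have hk : forall t, a <= t <= b -> ((L / d)%:E < lower_deriv f (q t))%E.
    move=> t ht; have : ~ (lower_deriv f (q t) * d%:E <= path_length (f \o q) a b)%E.
      by move=> h; apply: hne; exists t.
    move/negP; rewrite -ltNge Lfin.
    case: (lower_deriv f (q t)) => [r| |] //=.
    - by rewrite -EFinM !lte_fin ltr_pdivrMr.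
    - by rewrite ltry.
    - by rewrite mulNyr gtr0_sg // mul1e.
  have [n [s [ps [_ [hstr hdq]]]]] :=
    creep f q (L / d) a b (fun t ht => local_pair f q a b (L / d) t hq ht (hk t ht)) a b
      (lexx a) hab (lexx b).
  have SQpos : 0 < SQ q n s by apply: lt_le_trans hdq.
  have h1 := hstr SQpos.
  have h2 := SFub n s ps.
  have h3 : L <= L / d * SQ q n s.
    rewrite -{1}(divfK (negbT (gt_eqF d0)) L) ler_wpM2l //.
    by rewrite divr_ge0 // ltW.
  lra.
move=> m hm0 hmoo.
have mfin : m = (fine m)%:E by rewrite fineK // ge0_fin_numE // ltW.
move: mfin; set M := fine m => mfin.
have M0 : 0 < M by rewrite -lte_fin -mfin.
have hD : forall t, a <= t <= b -> (m <= lower_deriv f (q t))%E.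
  move=> t ht; apply: ereal_inf_lbound; exists t => //=.
have key : forall n t, Defs.partition a b n t -> M * SQ q n t <= L.
  move=> n t pt; apply: lim_mul => //; first exact: SQ_ge0.
  move=> c c0 cM.
  have hc : forall t', a <= t' <= b -> (c%:E < lower_deriv f (q t'))%E.
    move=> t' ht'; apply: lt_le_trans (hD t' ht').
    by rewrite mfin lte_fin.
  have G : forall i, (i < n)%N -> Good f q c (t i) (t i.+1).
    move=> i hi.
    have /andP[ai _] := partition_bounds pt i (ltnW hi).
    have /andP[_ bi] := partition_bounds pt i.+1 hi.
    apply: (creep f q c a b (fun t0 ht0 => local_pair f q a b c t0 hq ht0 (hc t0 ht0))) => //.
    by case: pt => _ [_ ]; apply.
  have Ind : forall j, (j <= n)%N -> exists N s, Defs.partition a (t j) N s /\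
      c * \sum_(i < j) mdist (q (t i)) (q (t i.+1)) <= SF f q N s.
    elim=> [|j IH] hj.
      exists 0%N, (fun _ => a); split; first by case: pt => -> _.
      by rewrite /SF !big_ord0 mulr0.
    have [N [s [ps hs]]] := IH (ltnW hj).
    have [N2 [s2 [ps2 [a2 [_ c2]]]]] := G j hj.
    have [pc E] := concat_part ps ps2.
    exists (N + N2)%N, (cat_s N s s2); split => //.
    have := E (fun x y => mdist (f (q x)) (f (q y))); rewrite /SF => ->.
    rewrite big_ord_recr /= mulrDr; apply: lerD => //.
    apply: le_trans a2; apply: le_trans (ler_wpM2l (ltW c0) c2); exact: lexx.
  have [N [s [ps hs]]] := Ind n (leqnn n).
  move: ps; case: pt => _ [-> _] ps.
  exact: le_trans hs (SFub N s ps).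
have hq_le : (path_length q a b <= (L / M)%:E)%E.
  apply: ge_ereal_sup => y [n [t [pt ->]]].
  rewrite lee_fin mulrC ler_pdivlMl //; exact: key n t pt.
rewrite mfin Lfin; apply: le_trans (lee_wpmul2l _ hq_le) _.
  by rewrite lee_fin ltW.
by rewrite -EFinM mulrC divfK // gt_eqF.
Qed.
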